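(* Let $E$ be a regular biordered set satisfying: (E1) there exists $0\in E$ with $0\,\omega\,e$ for every $e\in E$; (E2) there is a map $e\mapsto e'$ on $E$ such that for all $e,f\in E$: (i) $(e')'=e$; (ii) $f\,\omega^l\,e$ iff $e'\,\omega^r\,f'$; (iii) $f\,\omega^l\,e'$ iff $M(f,e)=\{0\}$. Then the posets $L(E)=E/\mathcal L$ and $R(E)=E/\mathcal R$ are complemented modular lattices, and they are dually isomorphic.
   Context: A regular biordered set is a partial algebra isomorphic to the set of idempotents $E(S)$ of a regular semigroup $S$ (regular: every $x$ has $y$ with $xyx=x$), where $ef$ (computed in $S$) is defined when $\{ef,fe\}\cap\{e,f\}\ne\emptyset$. In $E$: $\omega^l=\{(e,f): ef=e\}$, $\omega^r=\{(e,f): fe=e\}$, $\omega=\omega^l\cap\omega^r$, $M(e,f)=\{g\in E: g\,\omega^l\,e,\ g\,\omega^r\,f\}$. Let $\mathcal L=\omega^l\cap(\omega^l)^{-1}$ and $\mathcal R=\omega^r\cap(\omega^r)^{-1}$, equivalence relations on $E$ with classes $\mathcal L(e)$, $\mathcal R(e)$. $E/\mathcal L$ is partially ordered by $\mathcal L(e)\le\mathcal L(f)$ iff $e\,\omega^l\,f$, and $E/\mathcal R$ by $\mathcal R(e)\le\mathcal R(f)$ iff $e\,\omega^r\,f$. *)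

(* Defs.v *)
(* A regular biordered set is (up to isomorphism) the
   biordered set E(S) of idempotents of a regular semigroup S; we work
   directly with E(S). *)
Set Implicit Arguments.

Section Semigroup.
Variable S : Type.
Variable mul : S -> S -> S.

Definition associative_op : Prop :=
  forall x y z, mul x (mul y z) = mul (mul x y) z.

Definition regular_semigroup : Prop :=
  forall x, exists y, mul (mul x y) x = x.

Definition idem (e : S) : Prop := mul e e = e.

Definition omega_l (e f : S) : Prop := mul e f = e.
Definition omega_r (e f : S) : Prop := mul f e = e.
Definition omega (e f : S) : Prop := omega_l e f /\ omega_r e f.

Definition Mset (e f : S) (g : S) : Prop :=
  idem g /\ omega_l g e /\ omega_r g f.

Definition Lrel (e f : S) : Prop := omega_l e f /\ omega_l f e.
Definition Rrel (e f : S) : Prop := omega_r e f /\ omega_r f e.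

Definition Lcls (e : S) : S -> Prop := fun x => idem x /\ Lrel x e.
Definition Rcls (e : S) : S -> Prop := fun x => idem x /\ Rrel x e.

(* E/L and E/R as types of classes *)
Definition LE : Type := { A : S -> Prop | exists e, idem e /\ A = Lcls e }.
Definition RE : Type := { A : S -> Prop | exists e, idem e /\ A = Rcls e }.

Definition LE_le (A B : LE) : Prop :=
  exists e f, proj1_sig A e /\ proj1_sig B f /\ omega_l e f.
Definition RE_le (A B : RE) : Prop :=
  exists e f, proj1_sig A e /\ proj1_sig B f /\ omega_r e f.

End Semigroup.

Section Order.
Variable T : Type.
Variable le : T -> T -> Prop.

Definition partial_order : Prop :=
  (forall a, le a a) /\
  (forall a b, le a b -> le b a -> a = b) /\
  (forall a b c, le a b -> le b c -> le a c).

Definition is_glb (a b m : T) : Prop :=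
  le m a /\ le m b /\ forall c, le c a -> le c b -> le c m.
Definition is_lub (a b j : T) : Prop :=
  le a j /\ le b j /\ forall c, le a c -> le b c -> le j c.

Definition is_lattice : Prop :=
  partial_order /\
  forall a b, (exists m, is_glb a b m) /\ (exists j, is_lub a b j).

(* modular law: a <= b  ->  (a v x) ^ b = a v (x ^ b) *)
Definition modular : Prop :=
  forall a b x, le a b ->
  forall j m n k, is_lub a x j -> is_glb j b m -> is_glb x b n ->
    is_lub a n k -> m = k.

Definition complemented : Prop :=
  exists bot top, (forall x, le bot x /\ le x top) /\
    forall a, exists c, is_glb a c bot /\ is_lub a c top.

Definition complemented_modular_lattice : Prop :=
  is_lattice /\ modular /\ complemented.

End Order.

Definition dually_isomorphic (T1 T2 : Type) (le1 : T1 -> T1 -> Prop)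
  (le2 : T2 -> T2 -> Prop) : Prop :=
  exists (f : T1 -> T2) (g : T2 -> T1),
    (forall x, g (f x) = x) /\ (forall y, f (g y) = y) /\
    (forall a b, le1 a b <-> le2 (f b) (f a)).

(* Main.v *)
Require Import Defs.
From Stdlib Require Import ProofIrrelevance FunctionalExtensionality PropExtensionality ClassicalEpsilon.

Section Transfer.
Variables (T1 T2 : Type) (le1 : T1 -> T1 -> Prop) (le2 : T2 -> T2 -> Prop)
  (f : T1 -> T2) (g : T2 -> T1).
Hypothesis gf : forall x, g (f x) = x.
Hypothesis fg : forall y, f (g y) = y.
Hypothesis mono : forall a b, le1 a b <-> le2 (f b) (f a).

Lemma le2_iff p q : le2 p q <-> le1 (g q) (g p).
Proof.
  split; intro H.
  - apply mono. rewrite !fg. exact H.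
  - apply mono in H. rewrite !fg in H. exact H.
Qed.

Lemma glb2_of p q r : is_lub le1 (g p) (g q) (g r) -> is_glb le2 p q r.
Proof.
  intros [H1 [H2 H3]]. split; [|split].
  - apply le2_iff; exact H1.
  - apply le2_iff; exact H2.
  - intros c Hc1 Hc2. apply le2_iff. apply H3; apply le2_iff; assumption.
Qed.

Lemma lub2_of p q r : is_glb le1 (g p) (g q) (g r) -> is_lub le2 p q r.
Proof.
  intros [H1 [H2 H3]]. split; [|split].
  - apply le2_iff; exact H1.
  - apply le2_iff; exact H2.
  - intros c Hc1 Hc2. apply le2_iff. apply H3; apply le2_iff; assumption.
Qed.

Lemma glb2_to p q r : is_glb le2 p q r -> is_lub le1 (g p) (g q) (g r).
Proof.
  intros [H1 [H2 H3]]. split; [|split].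
  - apply le2_iff; exact H1.
  - apply le2_iff; exact H2.
  - intros c Hc1 Hc2. rewrite <- (gf c). apply le2_iff. apply H3; apply le2_iff; rewrite gf; assumption.
Qed.

Lemma lub2_to p q r : is_lub le2 p q r -> is_glb le1 (g p) (g q) (g r).
Proof.
  intros [H1 [H2 H3]]. split; [|split].
  - apply le2_iff; exact H1.
  - apply le2_iff; exact H2.
  - intros c Hc1 Hc2. rewrite <- (gf c). apply le2_iff. apply H3; apply le2_iff; rewrite gf; assumption.
Qed.

Lemma lub_sym {T} (le : T -> T -> Prop) a b j : is_lub le a b j -> is_lub le b a j.
Proof. intros [H1 [H2 H3]]. split; [|split]; auto. Qed.
Lemma glb_sym {T} (le : T -> T -> Prop) a b j : is_glb le a b j -> is_glb le b a j.
Proof. intros [H1 [H2 H3]]. split; [|split]; auto. Qed.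

Lemma transfer : complemented_modular_lattice le1 -> complemented_modular_lattice le2.
Proof.
  intros [[[Hr [Ha Ht]] Hl] [Hm [bot [top [Hbt Hc]]]]].
  split; [split; [split; [|split]|] | split].
  - intro a. apply le2_iff, Hr.
  - intros a b H1 H2. rewrite <- (fg a), <- (fg b). f_equal.
    apply Ha; apply le2_iff; assumption.
  - intros a b c H1 H2. apply le2_iff. apply le2_iff in H1. apply le2_iff in H2.
    eapply Ht; eassumption.
  - intros a b. destruct (Hl (g a) (g b)) as [[m Hm'] [j Hj]]. split.
    + exists (f j). apply glb2_of. rewrite gf. exact Hj.
    + exists (f m). apply lub2_of. rewrite gf. exact Hm'.
  - intros a b x Hab j m n k Hj Hm2 Hn Hk.
    apply lub2_to in Hj. apply glb2_to in Hm2. apply glb2_to in Hn. apply lub2_to in Hk.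
    apply le2_iff in Hab.
    assert (E : g k = g m).
    { eapply (Hm (g b) (g a) (g x) Hab (g n) (g k) (g j) (g m)).
      - apply lub_sym; exact Hn.
      - apply glb_sym; exact Hk.
      - apply glb_sym; exact Hj.
      - apply lub_sym; exact Hm2. }
    rewrite <- (fg m), <- (fg k), E. reflexivity.
  - exists (f top), (f bot). split.
    + intro x. split; apply le2_iff; rewrite gf; apply Hbt.
    + intro a. destruct (Hc (g a)) as [c [H1 H2]]. exists (f c). split.
      * apply glb2_of. rewrite !gf. exact H2.
      * apply lub2_of. rewrite !gf. exact H1.
Qed.
End Transfer.

Lemma sig_eq {X} (Pr : X -> Prop) (a b : X) (pa : Pr a) (pb : Pr b) :
  a = b -> exist Pr a pa = exist Pr b pb.
Proof. intros ->. f_equal. apply proof_irrelevance. Qed.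

Section Quot.
Variables (S : Type) (mul : S -> S -> S).
Hypothesis assoc : associative_op mul.

Definition mkL (e : S) (He : idem mul e) : LE mul :=
  exist _ (Lcls mul e) (ex_intro _ e (conj He eq_refl)).

Lemma LE_rep (A : LE mul) : exists e (He : idem mul e), A = mkL e He.
Proof.
  destruct A as [P [e [He HP]]]. exists e, He. unfold mkL. apply sig_eq. exact HP.
Qed.

Lemma mkL_le e f He Hf : @LE_le S mul (mkL e He) (mkL f Hf) <-> mul e f = e.
Proof.
  unfold LE_le, mkL, Lcls, Lrel, omega_l; simpl. split.
  - intros [e0 [f0 [[_ [H1 H2]] [[_ [H3 H4]] H5]]]].
    assert (E : mul e0 f = e0).
    { rewrite <- H5 at 1. rewrite <- assoc, H3. exact H5. }
    transitivity (mul (mul e e0) f). rewrite H2; reflexivity.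
    rewrite <- assoc, E. exact H2.
  - intro H. exists e, f. repeat split; auto.
Qed.

Lemma mkL_eq e f He Hf : mul e f = e -> mul f e = f -> mkL e He = mkL f Hf.
Proof.
  intros H1 H2. unfold mkL. apply sig_eq.
  extensionality x. apply propositional_extensionality.
  unfold Lcls, Lrel, omega_l. split; intros [Hx [H3 H4]]; split; try exact Hx; split.
  - transitivity (mul (mul x e) f); [rewrite H3; reflexivity|]. rewrite <- assoc, H1; exact H3.
  - transitivity (mul (mul f e) x); [rewrite H2; reflexivity|]. rewrite <- assoc, H4; exact H2.
  - transitivity (mul (mul x f) e); [rewrite H3; reflexivity|]. rewrite <- assoc, H2; exact H3.
  - transitivity (mul (mul e f) x); [rewrite H1; reflexivity|]. rewrite <- assoc, H4; exact H1.
Qed.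

Lemma mkL_eq_inv e f He Hf : mkL e He = mkL f Hf -> mul e f = e /\ mul f e = f.
Proof.
  intro H. split.
  - apply (proj1 (mkL_le e f He Hf)). rewrite H. apply mkL_le. exact Hf.
  - apply (proj1 (mkL_le f e Hf He)). rewrite H. apply mkL_le. exact Hf.
Qed.

Lemma mkL_irr e f He Hf : e = f -> mkL e He = mkL f Hf.
Proof. intros ->. f_equal. apply proof_irrelevance. Qed.

Lemma LE_po : partial_order (@LE_le S mul).
Proof.
  split; [|split].
  - intro A. destruct (LE_rep A) as [e [He ->]]. apply mkL_le. exact He.
  - intros A B. destruct (LE_rep A) as [e [He ->]]. destruct (LE_rep B) as [f [Hf ->]].
    rewrite !mkL_le. intros. apply mkL_eq; assumption.
  - intros A B C. destruct (LE_rep A) as [e [He ->]]. destruct (LE_rep B) as [f [Hf ->]].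
    destruct (LE_rep C) as [g [Hg ->]]. rewrite !mkL_le. intros H1 H2.
    transitivity (mul (mul e f) g); [rewrite H1; reflexivity|]. rewrite <- assoc, H2; exact H1.
Qed.

End Quot.

Section Main.
Variables (S : Type) (mul : S -> S -> S).
Hypothesis Hassoc : associative_op mul.
Hypothesis Hreg : regular_semigroup mul.
Variable z : S.
Hypothesis Hz : idem mul z.
Hypothesis HE1 : forall e, idem mul e -> omega mul z e.
Variable pr : S -> S.
Hypothesis Hpr : forall e, idem mul e -> idem mul (pr e).
Hypothesis HE2i : forall e, idem mul e -> pr (pr e) = e.
Hypothesis HE2ii : forall e f, idem mul e -> idem mul f ->
             (omega_l mul f e <-> omega_r mul (pr e) (pr f)).
Hypothesis HE2iii : forall e f, idem mul e -> idem mul f ->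
             (omega_l mul f (pr e) <->
              (forall g, Mset mul f e g <-> g = z)).

Local Infix "**" := mul (at level 40, left associativity).

Lemma A3 x y w : x ** (y ** w) = x ** y ** w.
Proof. apply Hassoc. Qed.
Ltac na := repeat rewrite A3.
Lemma c2 a b c : a ** b = c -> forall w, w ** a ** b = w ** c.
Proof. intros H w. rewrite <- A3, H. reflexivity. Qed.
Lemma c3 a b d c : a ** b ** d = c -> forall w, w ** a ** b ** d = w ** c.
Proof. intros H w. rewrite <- H. na. reflexivity. Qed.
Lemma c4 a b d e c : a ** b ** d ** e = c -> forall w, w ** a ** b ** d ** e = w ** c.
Proof. intros H w. rewrite <- H. na. reflexivity. Qed.
Ltac rw H := first [rewrite H | rewrite (c2 _ _ _ H) | rewrite (c3 _ _ _ _ H) | rewrite (c4 _ _ _ _ _ H)]; na.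

Lemma zl e : idem mul e -> z ** e = z.
Proof. intro He. exact (proj1 (HE1 e He)). Qed.
Lemma zr e : idem mul e -> e ** z = z.
Proof. intro He. exact (proj2 (HE1 e He)). Qed.

Lemma Zl y : z ** y ** z = z -> z ** y = z.
Proof.
  intro H. assert (Hp : idem mul (z ** y)).
  { unfold idem. na. rewrite H. reflexivity. }
  pose proof (zl _ Hp) as E. rewrite A3, Hz in E. exact E.
Qed.
Lemma Zr y : z ** (y ** z) = z -> y ** z = z.
Proof.
  intro H. rewrite A3 in H. assert (Hp : idem mul (y ** z)).
  { unfold idem. transitivity (y ** (z ** y ** z)); [na; reflexivity|]. rewrite H. reflexivity. }
  pose proof (zr _ Hp) as E. rewrite <- A3, Hz in E. exact E.
Qed.

Lemma H2 e f : idem mul e -> idem mul f -> (f ** e = f <-> pr f ** pr e = pr e).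
Proof. intros He Hf. exact (HE2ii e f He Hf). Qed.

Lemma orth_le a b : idem mul a -> idem mul b -> a ** b = z -> a ** pr b = a.
Proof.
  intros Ha Hb Hab. apply (proj2 (HE2iii b a Hb Ha)). intro g; split.
  - intros [Hg [H1 H3]]. unfold omega_l, omega_r in *.
    transitivity ((g ** a) ** (b ** g)).
    + rewrite H1, H3. symmetry. exact Hg.
    + rewrite A3. rewrite <- (A3 g a b), Hab, zr by exact Hg. apply zl. exact Hg.
  - intros ->. split; [exact Hz|]. split; [apply zl; exact Ha | apply zr; exact Hb].
Qed.

Lemma le_orth' a b : idem mul a -> idem mul b -> a ** pr b = a -> a ** b = z.
Proof.
  intros Ha Hb H. pose proof (proj1 (HE2iii b a Hb Ha) H) as M.
  destruct (Hreg (a ** b)) as [s0 Hs0].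
  set (t := a ** b) in *.
  set (s := s0 ** t ** s0).
  assert (Hsts : s ** t ** s = s).
  { unfold s. na. rw Hs0. rw Hs0. reflexivity. }
  assert (Hts : t ** s ** t = t).
  { unfold s. na. rw Hs0. rw Hs0. reflexivity. }
  assert (Hg : b ** s ** a = z).
  { apply M. split; [|split]; unfold idem, omega_l, omega_r.
    - transitivity (b ** (s ** t ** s) ** a).
      + unfold t. na. reflexivity.
      + rewrite Hsts. reflexivity.
    - rewrite <- A3, Ha. reflexivity.
    - na. rewrite Hb. reflexivity. }
  rewrite <- Hts. fold t. 
  transitivity (a ** (b ** s ** a) ** b).
  - unfold t. na. reflexivity.
  - rewrite Hg, zr by exact Ha. apply zl. exact Hb.
Qed.

Lemma le_orth a b : idem mul a -> idem mul b -> (a ** b = a <-> a ** pr b = z).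
Proof.
  intros Ha Hb. split; intro H.
  - apply le_orth'; auto. rewrite HE2i; auto.
  - rewrite <- (HE2i b Hb). apply orth_le; auto.
Qed.


Lemma Hi e : idem mul e -> e ** e = e.
Proof. intro H; exact H. Qed.

Lemma Lt t j : idem mul j -> t ** pr j = z -> t ** j = t.
Proof.
  intros Hj H. destruct (Hreg t) as [y Hy].
  assert (Hq : idem mul (y ** t)).
  { unfold idem. na. rw Hy. reflexivity. }
  assert (E1 : y ** t ** pr j = y ** z).
  { rewrite <- A3, H. reflexivity. }
  assert (E2 : z ** (y ** z) = z).
  { rewrite <- E1. rewrite A3, zl by exact Hq. apply zl. apply Hpr; exact Hj. }
  apply Zr in E2. rewrite E2 in E1.
  apply (le_orth _ _ Hq Hj) in E1.
  transitivity (t ** y ** t ** j); [rewrite Hy; reflexivity|].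
  rw E1. exact Hy.
Qed.

Lemma meet_ex e f : idem mul e -> idem mul f -> exists mm, idem mul mm /\ mm ** e = mm /\ mm ** f = mm /\
  forall g, idem mul g -> g ** e = g -> g ** f = g -> g ** mm = g.
Proof.
  intros He Hf.
  destruct (Hreg (f ** pr e)) as [x Hx].
  set (a0 := f ** pr e) in *.
  assert (Hu : idem mul (a0 ** x)).
  { unfold idem. na. rw Hx. reflexivity. }
  set (u := a0 ** x) in *.
  assert (Hua : u ** a0 = a0).
  { unfold u. exact Hx. }
  destruct (Hreg (pr u ** f)) as [y Hy].
  set (w := pr u ** f) in *.
  assert (Hm : idem mul (y ** w)).
  { unfold idem. na. rw Hy. reflexivity. }
  assert (Epu : pr u ** u = z).
  { pose proof (proj1 (le_orth (pr u) (pr u) (Hpr _ Hu) (Hpr _ Hu)) (Hpr _ Hu)) as E.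
    rewrite HE2i in E by exact Hu. exact E. }
  exists (y ** w). split; [exact Hm|]. split; [|split].
  - apply le_orth; auto.
    assert (E : w ** pr e = z).
    { unfold w. rewrite <- A3. fold a0. rewrite <- Hua. rewrite A3, Epu. unfold a0. na.
      rewrite zl by exact Hf. apply zl. apply Hpr; exact He. }
    assert (E' : y ** w ** pr e = y ** z).
    { rewrite <- E. na. reflexivity. }
    rewrite E'. apply Zr. rewrite <- E'. rewrite A3, zl by exact Hm. apply zl. apply Hpr; exact He.
  - unfold w. na. rw Hf. reflexivity.
  - intros g Hg Hge Hgf.
    assert (Ege : g ** pr e = z) by (apply le_orth; auto).
    assert (Egu : g ** u = z ** x).
    { unfold u, a0. na. rw Hgf. rewrite Ege. reflexivity. }
    assert (Ezx : z ** x = z).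
    { apply Zl. rewrite <- Egu. rewrite <- A3, zr by exact Hu. apply zr. exact Hg. }
    rewrite Ezx in Egu.
    assert (Egpu : g ** pr u = g).
    { apply le_orth; auto. rewrite HE2i by exact Hu. exact Egu. }
    assert (Egw : g ** w = g).
    { unfold w. rewrite A3, Egpu. exact Hgf. }
    transitivity (g ** w ** y ** w).
    + rewrite Egw. na. reflexivity.
    + rw Hy. exact Egw.
Qed.


Lemma join_ex a x : idem mul a -> idem mul x -> exists n, idem mul n /\
  (forall c, idem mul c -> (c ** pr n = c <-> exists r, c ** pr x = r ** (a ** pr x))) /\
  (forall g, idem mul g -> a ** g = a -> x ** g = x -> pr n ** g = pr n).
Proof.
  intros Ha Hx.
  destruct (Hreg (a ** pr x)) as [s Hs].
  set (t0 := a ** pr x) in *.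
  assert (Hu : idem mul (s ** t0)).
  { unfold idem. na. rw Hs. reflexivity. }
  set (u := s ** t0) in *.
  assert (Htu : t0 ** u = t0).
  { unfold u. rewrite A3. exact Hs. }
  assert (Eup : u ** pr u = z).
  { apply le_orth; auto. }
  destruct (Hreg (pr x ** pr u)) as [y Hy].
  set (w := pr x ** pr u) in *.
  assert (Hn : idem mul (w ** y)).
  { unfold idem. na. rw Hy. reflexivity. }
  assert (Hnw : w ** y ** w = w) by exact Hy.
  set (n := w ** y) in *.
  assert (Hpx : idem mul (pr x)) by (apply Hpr; exact Hx).
  assert (Hpu : idem mul (pr u)) by (apply Hpr; exact Hu).
  assert (Hw : z ** w = z).
  { unfold w. rewrite A3, zl by exact Hpx. apply zl. exact Hpu. }
  exists n. split; [exact Hn|]. split.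
  - intros c Hc. split.
    + intro H. apply le_orth in H; auto. rewrite HE2i in H by exact Hn.
      assert (Ecw : c ** pr x ** pr u = z).
      { transitivity (c ** w); [unfold w; na; reflexivity|].
        rewrite <- Hnw. fold n. rewrite A3, H. exact Hw. }
      apply Lt in Ecw; [|exact Hu].
      exists (c ** pr x ** s). rewrite <- Ecw at 1. unfold u. na. reflexivity.
    + intros [r Hr].
      assert (Ecw : c ** w = r ** t0 ** z).
      { unfold w. rewrite A3, Hr.
        transitivity (r ** (t0 ** u) ** pr u); [rewrite Htu; reflexivity|].
        rewrite <- !A3. rewrite Eup. reflexivity. }
      assert (Ecw' : c ** w = z).
      { rewrite Ecw. apply Zr. rewrite <- Ecw. rewrite A3, zl by exact Hc. exact Hw. }
      assert (Ecn : c ** n = z ** y).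
      { unfold n. rewrite A3, Ecw'. reflexivity. }
      assert (Ezy : z ** y = z).
      { apply Zl. rewrite <- Ecn. rewrite <- A3, zr by exact Hn. apply zr. exact Hc. }
      rewrite Ezy in Ecn.
      apply le_orth; auto. rewrite HE2i by exact Hn. exact Ecn.
  - intros g Hg Hag Hxg.
    assert (Hpg : idem mul (pr g)) by (apply Hpr; exact Hg).
    apply (H2 g (pr n) Hg (Hpr _ Hn)). rewrite HE2i by exact Hn.
    apply (H2 g a Hg Ha) in Hag. apply (H2 g x Hg Hx) in Hxg.
    assert (Eaa : a ** pr a = z) by (apply le_orth; auto).
    assert (Eug : u ** pr g = s ** z).
    { unfold u, t0. na. rw Hxg. rewrite <- Hag. na. rw Eaa. rewrite <- A3, zl by exact Hpg. reflexivity. }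
    assert (Eug' : u ** pr g = z).
    { rewrite Eug. apply Zr. rewrite <- Eug. rewrite A3, zl by exact Hu. apply zl. exact Hpg. }
    assert (Eug2 : u ** g = u) by (apply le_orth; auto).
    apply (H2 g u Hg Hu) in Eug2.
    assert (Ewg : w ** pr g = pr g).
    { unfold w. rewrite <- A3, Eug2. exact Hxg. }
    transitivity (n ** (w ** pr g)); [rewrite Ewg; reflexivity|].
    rewrite A3, Hnw. exact Ewg.
Qed.

Lemma mod_core a b x c mm : idem mul a -> idem mul b -> idem mul x -> idem mul c -> idem mul mm ->
  a ** b = a -> c ** b = c -> (exists r, c ** pr a = r ** (x ** pr a)) ->
  (forall q, idem mul q -> q ** x = q -> q ** b = q -> q ** mm = q) ->
  exists r, c ** pr a = r ** (mm ** pr a).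
Proof.
  intros Ha Hb Hx Hc Hm Hab Hcb [r Hr] Hmm.
  assert (Hpab : pr a ** pr b = pr b) by (apply (H2 b a Hb Ha); exact Hab).
  assert (Etb : r ** x ** pr b = z).
  { transitivity (r ** x ** (pr a ** pr b)); [rewrite Hpab; reflexivity|].
    transitivity (r ** (x ** pr a) ** pr b); [na; reflexivity|].
    rewrite <- Hr. rewrite <- A3, Hpab. apply le_orth; auto. }
  apply Lt in Etb; [|exact Hb].
  assert (Etx : r ** x ** x = r ** x) by (rewrite <- A3, Hx; reflexivity).
  set (t := r ** x) in *.
  destruct (Hreg t) as [v Hv].
  assert (Hq : idem mul (v ** t)).
  { unfold idem. na. rw Hv. reflexivity. }
  assert (Hqm : v ** t ** mm = v ** t).
  { apply Hmm; auto.
    - rewrite <- A3, Etx. reflexivity.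
    - rewrite <- A3, Etb. reflexivity. }
  exists t. rewrite Hr. rewrite A3. rewrite (A3 t mm).
  f_equal. change (r ** x) with t. symmetry.
  transitivity (t ** v ** t ** mm).
  - rewrite Hv. reflexivity.
  - rw Hqm. exact Hv.
Qed.


Lemma mkLle e f He Hf : @LE_le S mul (mkL S mul e He) (mkL S mul f Hf) <-> e ** f = e.
Proof. apply mkL_le. exact Hassoc. Qed.
Lemma mkLle1 e f He Hf : @LE_le S mul (mkL S mul e He) (mkL S mul f Hf) -> e ** f = e.
Proof. apply mkLle. Qed.

Lemma L_lat : is_lattice (@LE_le S mul).
Proof.
  split; [exact (LE_po S mul Hassoc)|].
  intros A B. destruct (LE_rep _ _ A) as [e [He ->]]. destruct (LE_rep _ _ B) as [f [Hf ->]]. split.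
  - destruct (meet_ex e f He Hf) as [mm [Hm [H1 [H3 H4]]]]. exists (mkL S mul mm Hm).
    split; [|split].
    + apply mkLle; exact H1.
    + apply mkLle; exact H3.
    + intros C. destruct (LE_rep _ _ C) as [g [Hg ->]]. rewrite !mkLle. apply H4; exact Hg.
  - destruct (join_ex e f He Hf) as [n [Hn [Hc Hu]]]. exists (mkL S mul (pr n) (Hpr _ Hn)).
    split; [|split].
    + apply mkLle. apply Hc; auto. exists e. rewrite A3, He. reflexivity.
    + apply mkLle. apply Hc; auto. exists z. rewrite A3, zl, zl; auto.
      apply le_orth; auto.
    + intros C. destruct (LE_rep _ _ C) as [g [Hg ->]]. rewrite !mkLle. intros; apply Hu; auto.
Qed.

Lemma L_mod : modular (@LE_le S mul).
Proof.
  intros A B X Hab J M N K Hj Hm Hn Hk.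
  destruct (LE_po S mul Hassoc) as [Pr [Pa Pt]].
  apply Pa.
  2:{ apply Hk.
      - apply Hm; [apply Hj | exact Hab].
      - apply Hm; [apply (Pt N X J); [apply Hn | apply Hj] | apply Hn]. }
  destruct (LE_rep _ _ A) as [a [Ha ->]]. destruct (LE_rep _ _ B) as [b [Hb ->]].
  destruct (LE_rep _ _ X) as [x [Hx ->]]. destruct (LE_rep _ _ M) as [c [Hc ->]].
  destruct (LE_rep _ _ N) as [nn [Hnn ->]]. destruct (LE_rep _ _ K) as [k [Hkk ->]].
  apply mkLle in Hab.
  assert (Hcb : c ** b = c) by (eapply mkLle1; apply Hm).
  destruct (join_ex x a Hx Ha) as [n1 [Hn1 [Hc1 Hu1]]].
  assert (HJ1 : @LE_le S mul J (mkL S mul (pr n1) (Hpr _ Hn1))).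
  { apply Hj.
    - apply mkLle. apply Hc1; auto. exists z. rewrite A3, zl, zl; auto.
      apply le_orth; auto.
    - apply mkLle. apply Hc1; auto. exists x. rewrite A3, Hx. reflexivity. }
  assert (HcJ1 : c ** pr n1 = c).
  { eapply mkLle1. apply (Pt _ J). apply Hm. exact HJ1. }
  apply Hc1 in HcJ1; [|exact Hc].
  assert (Hmm : forall q, idem mul q -> q ** x = q -> q ** b = q -> q ** nn = q).
  { intros q Hq H1 H3. apply (mkLle1 q nn Hq Hnn). apply Hn; apply mkLle; assumption. }
  destruct (mod_core a b x c nn Ha Hb Hx Hc Hnn Hab Hcb HcJ1 Hmm) as [r' Hr'].
  destruct (join_ex nn a Hnn Ha) as [n2 [Hn2 [Hc2 Hu2]]].
  apply (Pt _ (mkL S mul (pr n2) (Hpr _ Hn2))).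
  - apply mkLle. apply Hc2; auto. exists r'. exact Hr'.
  - apply mkLle. apply Hu2; auto; eapply mkLle1; apply Hk.
Qed.

Lemma L_comp : complemented (@LE_le S mul).
Proof.
  assert (Htop : forall e, idem mul e -> e ** pr z = e).
  { intros e He. apply (proj2 (le_orth e (pr z) He (Hpr z Hz))). rewrite HE2i by exact Hz.
    apply zr. exact He. }
  exists (mkL S mul z Hz), (mkL S mul (pr z) (Hpr z Hz)). split.
  - intro A. destruct (LE_rep _ _ A) as [e [He ->]]. split; apply mkLle.
    + apply zl; exact He.
    + apply Htop; exact He.
  - intro A. destruct (LE_rep _ _ A) as [e [He ->]]. exists (mkL S mul (pr e) (Hpr e He)). split.
    + split; [|split].
      * apply mkLle, zl; exact He.
      * apply mkLle, zl, Hpr; exact He.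
      * intros C. destruct (LE_rep _ _ C) as [g [Hg ->]]. rewrite !mkLle. intros H1 H3.
        apply le_orth in H1; auto. assert (g = z) by congruence. subst g. exact Hz.
    + split; [|split].
      * apply mkLle, Htop; exact He.
      * apply mkLle, Htop, Hpr; exact He.
      * intros C. destruct (LE_rep _ _ C) as [g [Hg ->]]. rewrite !mkLle. intros H1 H3.
        apply (H2 g e Hg He) in H1. apply (H2 g (pr e) Hg (Hpr _ He)) in H3.
        rewrite HE2i in H3 by exact He.
        assert (Epg : pr g = z).
        { rewrite <- H3, <- H1. rewrite A3. rewrite (proj1 (le_orth e e He He) He).
          apply zl, Hpr; exact Hg. }
        assert (Eg : g = pr z) by (rewrite <- Epg; symmetry; apply HE2i; exact Hg).
        rewrite <- Eg. exact Hg.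
Qed.

Lemma L_cml : complemented_modular_lattice (@LE_le S mul).
Proof. split; [exact L_lat | split; [exact L_mod | exact L_comp]]. Qed.



Lemma assoc_flip : associative_op (fun x y => mul y x).
Proof. intros x y w. symmetry. apply Hassoc. Qed.

Definition mkR (e : S) (He : idem mul e) : RE mul :=
  exist _ (Rcls mul e) (ex_intro _ e (conj He eq_refl)).

Lemma RE_rep (B : RE mul) : exists e (He : idem mul e), B = mkR e He.
Proof. exact (LE_rep S (fun x y => mul y x) B). Qed.

Lemma mkRle e f He Hf : @RE_le S mul (mkR e He) (mkR f Hf) <-> f ** e = e.
Proof. exact (mkL_le S (fun x y => mul y x) assoc_flip e f He Hf). Qed.

Lemma mkR_eq e f He Hf : f ** e = e -> e ** f = f -> mkR e He = mkR f Hf.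
Proof. exact (mkL_eq S (fun x y => mul y x) assoc_flip e f He Hf). Qed.

Definition rL (A : LE mul) : S :=
  proj1_sig (constructive_indefinite_description (fun e => idem mul e /\ proj1_sig A = Lcls mul e) (proj2_sig A)).
Lemma rL_spec A : idem mul (rL A) /\ proj1_sig A = Lcls mul (rL A).
Proof. unfold rL. destruct (constructive_indefinite_description _ _) as [e He]. exact He. Qed.
Definition rR (B : RE mul) : S :=
  proj1_sig (constructive_indefinite_description (fun e => idem mul e /\ proj1_sig B = Rcls mul e) (proj2_sig B)).
Lemma rR_spec B : idem mul (rR B) /\ proj1_sig B = Rcls mul (rR B).
Proof. unfold rR. destruct (constructive_indefinite_description _ _) as [e He]. exact He. Qed.

Definition fmap (A : LE mul) : RE mul := mkR (pr (rL A)) (Hpr _ (proj1 (rL_spec A))).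
Definition gmap (B : RE mul) : LE mul := mkL S mul (pr (rR B)) (Hpr _ (proj1 (rR_spec B))).

Lemma H2' a b : idem mul a -> idem mul b -> (pr a ** pr b = pr a <-> a ** b = b).
Proof.
  intros Ha Hb. pose proof (H2 (pr b) (pr a) (Hpr _ Hb) (Hpr _ Ha)) as E.
  rewrite !HE2i in E by assumption. exact E.
Qed.

Lemma fmap_mk e He : fmap (mkL S mul e He) = mkR (pr e) (Hpr e He).
Proof.
  unfold fmap. destruct (rL_spec (mkL S mul e He)) as [H0 E]. simpl in E.
  set (e0 := rL (mkL S mul e He)) in *.
  assert (Hl : Lcls mul e0 e) by (rewrite <- E; split; [exact He | split; exact He]).
  destruct Hl as [_ [H3 H4]]. unfold omega_l in *.
  apply mkR_eq.
  - apply (H2 e0 e H0 He). exact H3.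
  - apply (H2 e e0 He H0). exact H4.
Qed.

Lemma gmap_mk h Hh : gmap (mkR h Hh) = mkL S mul (pr h) (Hpr h Hh).
Proof.
  unfold gmap. destruct (rR_spec (mkR h Hh)) as [H0 E]. simpl in E.
  set (h0 := rR (mkR h Hh)) in *.
  assert (Hl : Rcls mul h0 h) by (rewrite <- E; split; [exact Hh | split; exact Hh]).
  destruct Hl as [_ [H3 H4]]. unfold omega_r in *.
  apply mkL_eq; [exact Hassoc| |].
  - apply H2'; auto.
  - apply H2'; auto.
Qed.

Lemma dual : dually_isomorphic (@LE_le S mul) (@RE_le S mul).
Proof.
  exists fmap, gmap. split; [|split].
  - intro A. destruct (LE_rep _ _ A) as [e [He ->]]. rewrite fmap_mk, gmap_mk.
    apply mkL_irr. apply HE2i; exact He.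
  - intro B. destruct (RE_rep B) as [h [Hh ->]]. rewrite gmap_mk, fmap_mk.
    exact (mkL_irr S (fun x y => mul y x) _ _ _ _ (HE2i h Hh)).
  - intros A B. destruct (LE_rep _ _ A) as [e [He ->]]. destruct (LE_rep _ _ B) as [f [Hf ->]].
    rewrite !fmap_mk, mkLle, mkRle. apply H2; auto.
Qed.

Lemma all_main : complemented_modular_lattice (@LE_le S mul) /\
  complemented_modular_lattice (@RE_le S mul) /\
  dually_isomorphic (@LE_le S mul) (@RE_le S mul).
Proof.
  split; [exact L_cml|]. split; [|exact dual].
  destruct dual as [f [g [gf [fg mono]]]].
  exact (transfer _ _ _ _ f g gf fg mono L_cml).
Qed.

End Main.
Theorem corollary3p4 (S : Type) (mul : S -> S -> S)
  (Hassoc : associative_op mul) (Hreg : regular_semigroup mul)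
  (z : S) (Hz : idem mul z) (HE1 : forall e, idem mul e -> omega mul z e)
  (prime : S -> S) (Hpr : forall e, idem mul e -> idem mul (prime e))
  (HE2i : forall e, idem mul e -> prime (prime e) = e)
  (HE2ii : forall e f, idem mul e -> idem mul f ->
             (omega_l mul f e <-> omega_r mul (prime e) (prime f)))
  (HE2iii : forall e f, idem mul e -> idem mul f ->
             (omega_l mul f (prime e) <->
              (forall g, Mset mul f e g <-> g = z))) :
  complemented_modular_lattice (@LE_le S mul) /\
  complemented_modular_lattice (@RE_le S mul) /\
  dually_isomorphic (@LE_le S mul) (@RE_le S mul).
Proof.
  exact (all_main S mul Hassoc Hreg z Hz HE1 prime Hpr HE2i HE2ii HE2iii).
Qed.
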